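(* Let $n\ge 4$, $N=\{1,\dots,n\}$, fix distinct $i_1,i_2\in N$ and let $\hat N^c=N\setminus\{i_1,i_2\}$. Then the inequality $$\sum_{j\in\hat N^c}\left(x_{i_1j}+x_{ji_1}+x_{i_2j}\right)-x_{i_2i_1}-\sum_{j,j'\in\hat N^c:\,j\ne j'} x_{jj'}\le 3-\frac{(n-4)(n-5)}{2}$$ is a valid inequality for the weak order polytope $P^n_{WO}$, i.e. it holds for every point $x\in P^n_{WO}$.
   Context: Let $N=\{1,\dots,n\}$ and $A_N=\{(i,j): i,j\in N, i\ne j\}$. A weak order on $N$ is a binary relation $W\subseteq N\times N$ that is reflexive, transitive and total; $(i,j)\in W$ is read ''$i$ is preferred over or tied with $j$''. The characteristic vector of $W$ is $x^W\in\{0,1\}^{A_N}$ with $x^W_{(i,j)}=1$ if $(i,j)\in W$ and $0$ otherwise. The weak order polytope $P^n_{WO}$ is the convex hull of the characteristic vectors of all weak orders on $N$; its points are vectors $x\in\mathbb{R}^{A_N}$ and $x_{ij}$ denotes the coordinate $x_{(i,j)}$. *)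

(* Defs.v *)
From mathcomp Require Import all_boot all_order all_algebra.
Set Implicit Arguments. Unset Strict Implicit. Unset Printing Implicit Defensive.
Import Order.TTheory GRing.Theory Num.Theory.
Local Open Scope ring_scope.

Definition is_weak_order (n : nat) (W : {set 'I_n * 'I_n}) : bool :=
  [&& [forall i, (i, i) \in W],
      [forall i, forall j, forall k,
         ((i, j) \in W) && ((j, k) \in W) ==> ((i, k) \in W)] &
      [forall i, forall j, ((i, j) \in W) || ((j, i) \in W)]].

(* Characteristic vector x^W, coordinate (i,j) (used only for i <> j). *)
Definition char_vec (R : numDomainType) (n : nat) (W : {set 'I_n * 'I_n})
  (i j : 'I_n) : R := if (i, j) \in W then 1 else 0.

(* x : R^{A_N}, given as a function on pairs; only off-diagonal
   coordinates are meaningful.  x lies in P^n_WO iff it is a convex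
   combination of characteristic vectors of weak orders. *)
Definition in_weak_order_polytope (R : numDomainType) (n : nat)
  (x : 'I_n -> 'I_n -> R) : Prop :=
  exists lam : {set 'I_n * 'I_n} -> R,
    [/\ (forall W, 0 <= lam W),
        (forall W, ~~ is_weak_order W -> lam W = 0),
        \sum_W lam W = 1 &
        (forall i j : 'I_n, i != j ->
           x i j = \sum_W lam W * char_vec R W i j)].

(* Main.v *)
Require Import Defs.
From mathcomp Require Import all_boot all_order all_algebra.
From mathcomp Require Import lra zify ring.
Import Order.TTheory GRing.Theory Num.Theory.
Local Open Scope ring_scope.

Lemma inner_sum (R : realFieldType) n (i1 i2 j : 'I_n) (f : 'I_n -> R) :
  (j != i1) && (j != i2) ->
  \sum_(j' | [&& j' != i1, j' != i2 & j' != j]) f j' =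
  \sum_(j' | (j' != i1) && (j' != i2)) f j' - f j.
Proof.
move=> Sj; rewrite (bigD1 j Sj) /= addrC addrK.
by apply: eq_bigl => k; rewrite andbA.
Qed.

Lemma cardNS n (i1 i2 : 'I_n) : i1 != i2 ->
  #|[pred j : 'I_n | (j != i1) && (j != i2)]| = (n - 2)%N.
Proof.
move=> h; have := card_ord n; rewrite (cardD1 i1) (cardD1 i2) !inE eq_sym h /=.
have -> : #|[predD1 [predD1 'I_n & i1] & i2]| = #|[pred j : 'I_n | (j != i1) && (j != i2)]|.
  apply: eq_card => k; rewrite !inE; by case: (k != i1); case: (k != i2).
move=> e; lia.
Qed.

Lemma sumS1 (R : realFieldType) n (i1 i2 : 'I_n) : i1 != i2 ->
  \sum_(j | (j != i1) && (j != i2)) (1 : R) = (n - 2)%:R.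
Proof.
move=> h; rewrite -(@cardNS _ _ _ h) -sumr_const.
by apply: eq_bigl => k.
Qed.

Lemma sym_sum (R : realFieldType) n (i1 i2 : 'I_n) (F : 'I_n -> 'I_n -> R) :
  \sum_(j | (j != i1) && (j != i2))
      \sum_(j' | [&& j' != i1, j' != i2 & j' != j]) F j j' =
  \sum_(j | (j != i1) && (j != i2))
      \sum_(j' | [&& j' != i1, j' != i2 & j' != j]) F j' j.
Proof.
rewrite (exchange_big_dep (fun j => (j != i1) && (j != i2))) /=; last first.
  by move=> a b _ /and3P[-> -> _].
apply: eq_bigr => a Sa; apply: eq_bigl => b.
move: Sa => /andP[-> ->]; by rewrite /= andbA [a == b]eq_sym.
Qed.
Lemma rhsE (R : realFieldType) n : (4 <= n)%N ->
  ((n-4)*(n-5))%:R = ((n-2)%:R - 2) * ((n-2)%:R - 3) :> R.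
Proof.
case: n => [|[|[|[|[|k]]]]] //= _.
  have -> : ((4-4)*(4-5) = 0)%N by [].
  have -> : (4-2 = 2)%N by [].
  lra.
rewrite !subSS !subn0 natrM -[k.+3]addn3 -[k.+1]addn1 !natrD; ring.
Qed.

Lemma perW (R : realFieldType) n (i1 i2 : 'I_n) (W : {set 'I_n * 'I_n}) :
  (4 <= n)%N -> i1 != i2 -> is_weak_order W ->
  \sum_(j | (j != i1) && (j != i2))
     (char_vec R W i1 j + char_vec R W j i1 + char_vec R W i2 j)
  - char_vec R W i2 i1
  - \sum_(j | (j != i1) && (j != i2))
      \sum_(j' | [&& j' != i1, j' != i2 & j' != j]) char_vec R W j j'
  <= 3 - ((n - 4) * (n - 5))%:R / 2.
Proof.
move=> hn h12 /and3P[_ /forallP htr /forallP hto].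
pose w i j := (i, j) \in W.
have tr : forall i j k, w i j -> w j k -> w i k.
  move=> i j k a b; move: (htr i) => /forallP/(_ j)/forallP/(_ k).
  by rewrite /w -/(w i j) -/(w j k) a b.
have to : forall i j, w i j || w j i.
  by move=> i j; move: (hto i) => /forallP/(_ j).
have chiE : forall i j, char_vec R W i j = (w i j)%:R.
  by move=> i j; rewrite /char_vec /w; case: ((i, j) \in W).
pose tau i j := w i j && w j i.
pose m : R := (n - 2)%:R.
pose t1 : R := \sum_(j | (j != i1) && (j != i2)) (tau i1 j)%:R.
pose c : R := \sum_(j | (j != i1) && (j != i2)) (w i2 j)%:R.
pose Q := \sum_(j | (j != i1) && (j != i2))
      \sum_(j' | [&& j' != i1, j' != i2 & j' != j]) char_vec R W j j'.
pose Tt : R := \sum_(j | (j != i1) && (j != i2))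
      \sum_(j' | [&& j' != i1, j' != i2 & j' != j]) (tau j j')%:R.
have hE : \sum_(j | (j != i1) && (j != i2))
     (char_vec R W i1 j + char_vec R W j i1 + char_vec R W i2 j) = m + t1 + c.
  rewrite /m /t1 /c -(@sumS1 R _ _ _ h12) -!big_split /=.
  apply: eq_bigr => j _; rewrite !chiE /tau.
  by move: (to i1 j); case: (w i1 j); case: (w j i1); case: (w i2 j) => //= _; lra.
have hQ : Q + Q = m * (m - 1) + Tt.
  rewrite {2}/Q sym_sum /Q -big_split /=.
  under eq_bigr => j _ do rewrite -big_split /=.
  have -> : \sum_(j | (j != i1) && (j != i2))
      \sum_(j' | [&& j' != i1, j' != i2 & j' != j])
         (char_vec R W j j' + char_vec R W j' j) =
     \sum_(j | (j != i1) && (j != i2))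
      \sum_(j' | [&& j' != i1, j' != i2 & j' != j]) (1 + (tau j j')%:R).
    apply: eq_bigr => j _; apply: eq_bigr => j' _; rewrite !chiE /tau.
    by move: (to j j'); case: (w j j'); case: (w j' j) => //= _; lra.
  under eq_bigr => j Sj do rewrite big_split /= (@inner_sum R _ _ _ _ _ Sj) (@sumS1 R _ _ _ h12).
  rewrite big_split /= -/Tt; congr (_ + _).
  rewrite (eq_bigr (fun _ => 1 * (m - 1))); last by move=> *; rewrite mul1r.
  by rewrite -big_distrl /= (@sumS1 R _ _ _ h12).
have t1nat : exists k : nat, t1 = k%:R.
  by exists (\sum_(j | (j != i1) && (j != i2)) tau i1 j)%N; rewrite natr_sum.
have t1ge0 : 0 <= t1 by apply: sumr_ge0.
have Ttge0 : 0 <= Tt by apply: sumr_ge0 => j _; apply: sumr_ge0.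
have cle : c <= m.
  rewrite /c /m -(@sumS1 R _ _ _ h12); apply: ler_sum => j _.
  by case: (w i2 j) => /=; lra.
rewrite hE (@rhsE R _ hn) -/m -/Q chiE.
case hd: (w i2 i1) => /=.
- have hT : t1 * t1 - t1 <= Tt.
    have -> : t1 * t1 - t1 = \sum_(j | (j != i1) && (j != i2))
      \sum_(j' | [&& j' != i1, j' != i2 & j' != j]) ((tau i1 j)%:R * (tau i1 j')%:R).
      under [RHS]eq_bigr => j Sj do rewrite -big_distrr /= (@inner_sum R _ _ _ _ _ Sj) -/t1.
      rewrite (eq_bigr (fun j => (tau i1 j)%:R * t1 - (tau i1 j)%:R)); last first.
        by move=> j _; rewrite mulrBr; case: (tau i1 j); rewrite /= ?mulr1 ?mul0r ?subr0.
      by rewrite sumrB -big_distrl.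
    apply: ler_sum => j _; apply: ler_sum => j' _.
    have [/andP[/andP[a b] /andP[c' d]]|] := boolP (tau i1 j && tau i1 j').
      have -> : tau j j' by rewrite /tau (tr _ _ _ b c') (tr _ _ _ d a).
      by rewrite /tau a b c' d /= mulr1.
    by rewrite negb_and => /orP[] /negbTE ->; rewrite ?mul0r ?mulr0 ler0n.
  case: t1nat => k hk.
  have hk2 : 0 <= (t1 - 1) * (t1 - 2).
    rewrite hk; case: k {hk} => [|[|k]]; first lra.
      by rewrite subrr mul0r.
    rewrite -[k.+2]addn2 natrD; have := ler0n R k; nra.
  nra.
- have hc : t1 + c <= m.
    rewrite /t1 /c /m -(@sumS1 R _ _ _ h12) -big_split; apply: ler_sum => j _.
    rewrite /tau; case e1: (w i1 j); case e2: (w j i1); case e3: (w i2 j) => //=; try lra.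
    by move: (tr _ _ _ e3 e2); rewrite hd.
  nra.
Qed.

Theorem mainTheorem5 (R : realFieldType) (n : nat) (i1 i2 : 'I_n)
  (x : 'I_n -> 'I_n -> R) :
  (4 <= n)%N -> i1 != i2 -> in_weak_order_polytope x ->
  \sum_(j | (j != i1) && (j != i2)) (x i1 j + x j i1 + x i2 j) - x i2 i1
  - \sum_(j | (j != i1) && (j != i2))
      \sum_(j' | [&& j' != i1, j' != i2 & j' != j]) x j j'
  <= 3 - ((n - 4) * (n - 5))%:R / 2.
Proof.
move=> hn h12 [lam [lam0 lamW lam1 hx]].
pose x' i j := \sum_W lam W * char_vec R W i j.
rewrite (eq_bigr (fun j => x' i1 j + x' j i1 + x' i2 j)); last first.
  move=> j /andP[a b].
  have a' : i1 != j by rewrite eq_sym.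
  have b' : i2 != j by rewrite eq_sym.
  by rewrite (hx i1 j a') (hx j i1 a) (hx i2 j b').
rewrite (hx i2 i1); last by rewrite eq_sym.
rewrite [X in _ - X <= _](eq_bigr (fun j => \sum_(j' | [&& j' != i1, j' != i2 & j' != j]) x' j j'));
  last first.
  move=> j _; apply: eq_bigr => j' /and3P[_ _ h].
  by rewrite hx // eq_sym.
rewrite /x'.
under eq_bigr => j _ do rewrite -!big_split /=.
rewrite exchange_big /=.
under [X in _ - X <= _]eq_bigr => j _ do rewrite exchange_big /=.
rewrite [X in _ - X <= _]exchange_big /= -!sumrB.
apply: (@le_trans _ _ (\sum_W lam W * (3 - ((n - 4) * (n - 5))%:R / 2))).
  apply: ler_sum => W _.
  under eq_bigr => j _ do rewrite -!mulrDr.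
  rewrite -mulr_sumr.
  under eq_bigr => j _ do rewrite -mulr_sumr.
  rewrite -mulr_sumr -!mulrBr.
  have [hW|hW] := boolP (is_weak_order W).
    by apply: ler_wpM2l => //; apply: perW.
  by rewrite lamW // !mul0r.
by rewrite -mulr_suml lam1 mul1r.
Qed.
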